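(* Fix a monomial order on $S$. Let $J$ be an ideal of $S$ and let $(E_i)_{i\in\Lambda}$ be an arbitrary (nonempty) family of monomial ideals of $S$ such that $(J,E_i)$ is a G-nice pair for every $i\in\Lambda$. Put $E=\bigcap_{i\in\Lambda}E_i$. Then $(J,E)$ is a G-nice pair and $\bigcap_{i\in\Lambda}(J+E_i)=J+E$. Moreover, if $\mathcal G_J$ is a Gröbner basis of $J$, then $\mathcal G_J\cup G(E)$ is a Gröbner basis of $\bigcap_{i\in\Lambda}(J+E_i)$.
   Context: $K$ is a field and $S=K[x_1,\ldots,x_n]$ with a fixed monomial order. For $0\neq f\in S$, $\mathrm{in}(f)$ denotes its leading monomial; for an ideal $I$, $\mathrm{in}(I)$ is the ideal generated by the leading monomials of the nonzero elements of $I$. A pair $(J,E)$ of ideals of $S$ is called Gröbner nice (G-nice) if $\mathrm{in}(J+E)=\mathrm{in}(J)+\mathrm{in}(E)$. For a monomial ideal $E$, $G(E)$ denotes its unique minimal set of monomial generators. *)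

(* Defs.v *)
From HB Require Import structures.
From mathcomp Require Import all_boot all_algebra.
From mathcomp Require Import mpoly.
Set Implicit Arguments. Unset Strict Implicit. Unset Printing Implicit Defensive.
Import GRing.Theory.
Local Open Scope ring_scope.

Section GNice.
Variables (K : fieldType) (n : nat).
Local Notation S := {mpoly K[n]}.
Local Notation mon := 'X_{1..n}.

Definition pset := S -> Prop.
Definition pset_eq (A B : pset) : Prop := forall f, A f <-> B f.

Definition monomial_order (ord : rel mon) : Prop :=
  [/\ reflexive ord, antisymmetric ord, transitive ord, total ord &
      (forall m, ord mnm0 m)] /\
      (forall m1 m2 m3, ord m1 m2 -> ord (mnm_add m1 m3) (mnm_add m2 m3)).

Definition is_ideal (I : pset) : Prop :=
  [/\ I 0, (forall f g, I f -> I g -> I (f + g)) & (forall f g, I g -> I (f * g))].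

Definition ideal_gen (A : pset) : pset :=
  fun f => forall I, is_ideal I -> (forall a, A a -> I a) -> I f.

Definition monos (M : mon -> Prop) : pset := fun p => exists2 m, M m & p = 'X_[m].

Definition monomial_ideal (E : pset) : Prop :=
  exists M : mon -> Prop, pset_eq E (ideal_gen (monos M)).

Definition ideal_sum (J E : pset) : pset :=
  fun h => exists f g, [/\ J f, E g & h = f + g].

Definition ideal_bigcap (L : Type) (E : L -> pset) : pset := fun f => forall i, E i f.

Definition pset_union (A B : pset) : pset := fun f => A f \/ B f.

Definition is_lead_mon (ord : rel mon) (f : S) (m : mon) : Prop :=
  m \in msupp f /\ forall m', m' \in msupp f -> ord m' m.

Definition lead_mons (ord : rel mon) (A : pset) : pset :=
  fun p => exists f m, [/\ A f, f != 0, is_lead_mon ord f m & p = 'X_[m]].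

Definition init_ideal (ord : rel mon) (I : pset) : pset := ideal_gen (lead_mons ord I).

Definition G_nice (ord : rel mon) (J E : pset) : Prop :=
  pset_eq (init_ideal ord (ideal_sum J E))
          (ideal_sum (init_ideal ord J) (init_ideal ord E)).

Definition min_gens (E : pset) : pset :=
  monos (fun m => E 'X_[m] /\ forall m', E 'X_[m'] -> lem m' m -> m' = m).

Definition pset_finite (A : pset) : Prop := exists s : seq S, forall f, A f <-> f \in s.

Definition groebner_basis (ord : rel mon) (I G : pset) : Prop :=
  [/\ pset_finite G, (forall g, G g -> I g) &
      pset_eq (init_ideal ord I) (ideal_gen (lead_mons ord G))].

End GNice.

(* Main.v *)
Require Import Defs.
From HB Require Import structures.
From mathcomp Require Import all_boot all_algebra.
From mathcomp Require Import mpoly.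
From mathcomp Require Import zify.
From Stdlib Require Import Classical ClassicalEpsilon.

Module Helpers.
Set Implicit Arguments. Unset Strict Implicit. Unset Printing Implicit Defensive.

Section Dickson.
Variable n : nat.
Local Notation mon := 'X_{1..n}.

Definition lek k (m1 m2 : mon) := forall i : 'I_n, i < k -> m1 i <= m2 i.

Definition Dk k := forall A : mon -> Prop, exists F : seq mon,
  (forall f, f \in F -> A f) /\ (forall a, A a -> exists2 f, f \in F & lek k f a).

Lemma D0 : Dk 0.
Proof.
move=> A; case: (classic (exists a, A a)) => [[a Ha]|H].
- exists [:: a]; split; first by move=> f; rewrite mem_seq1 => /eqP ->.
  by move=> a' _; exists a; rewrite ?mem_seq1.
- exists [::]; split => // a Ha; exfalso; apply: H; by exists a.
Qed.

Lemma DS k : Dk k -> Dk k.+1.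
Proof.
move=> IH A; case: (ltnP k n) => Hk; last first.
  have [F [H1 H2]] := IH A; exists F; split => // a /H2 [f Hf le]; exists f => //.
  move=> i Hi; apply: le; exact: leq_trans (ltn_ord i) Hk.
pose ik := Ordinal Hk.
have step f a : lek k f a -> f ik <= a ik -> lek k.+1 f a.
  move=> le lei i; rewrite ltnS leq_eqVlt => /orP [/eqP E|]; last exact: le.
  by have -> : i = ik by apply: val_inj.
have inner c : exists G : seq mon, (forall f, f \in G -> A f) /\
    (forall a, A a -> a ik < c -> exists2 f, f \in G & lek k.+1 f a).
  elim: c => [|c [G [G1 G2]]]; first by exists [::].
  have [Fc [Fc1 Fc2]] := IH (fun a => A a /\ a ik = c).
  exists (G ++ Fc); split.
  - by move=> f; rewrite mem_cat => /orP [/G1|/Fc1 []].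
  - move=> a Ha; rewrite ltnS leq_eqVlt => /orP [/eqP E|Hlt].
    + have [f Hf le] := Fc2 a (conj Ha E); exists f; first by rewrite mem_cat Hf orbT.
      by apply: step => //; have [_ ->] := Fc1 f Hf; rewrite E.
    + by have [f Hf le] := G2 a Ha Hlt; exists f; rewrite ?mem_cat ?Hf.
have [F0 [F01 F02]] := IH A.
pose b := \max_(f <- F0) f ik.
have [G [G1 G2]] := inner b.
exists (F0 ++ G); split.
- by move=> f; rewrite mem_cat => /orP [/F01|/G1].
- move=> a Ha; case: (ltnP (a ik) b) => Hab.
  + by have [f Hf le] := G2 a Ha Hab; exists f; rewrite ?mem_cat ?Hf ?orbT.
  + have [f Hf le] := F02 a Ha; exists f; first by rewrite mem_cat Hf.
    apply: step => //; apply: leq_trans Hab.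
    by apply: (leq_bigmax_seq (P := xpredT) (F := fun f : mon => f ik) f Hf).
Qed.

Lemma dickson (A : mon -> Prop) : exists F : seq mon,
  (forall f, f \in F -> A f) /\ (forall a, A a -> exists2 f, f \in F & (f <= a)%MM).
Proof.
have H : forall k, Dk k by elim=> [|k IH]; [exact: D0|exact: DS].
have [F [H1 H2]] := H n A; exists F; split => // a /H2 [f Hf le]; exists f => //.
by apply/mnm_lepP => i; apply: le.
Qed.

End Dickson.

Import GRing.Theory.
Local Open Scope ring_scope.

Section Basics.
Variables (K : fieldType) (n : nat).
Local Notation S := {mpoly K[n]}.
Local Notation mon := 'X_{1..n}.
Implicit Types (I A B : pset K n) (f g h : S) (m : mon).

Lemma ideal_gen_ideal A : is_ideal (ideal_gen A).
Proof.
split.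
- by move=> I [H0 _ _] _.
- by move=> f g Hf Hg I HI HA; case: (HI) => _ HD _; apply: HD; [apply: Hf|apply: Hg].
- by move=> f g Hg I HI HA; case: (HI) => _ _ HM; apply: HM; apply: Hg.
Qed.

Lemma ideal_gen_sub A f : A f -> ideal_gen A f.
Proof. by move=> Af I _ HA; apply: HA. Qed.

Lemma ideal_gen_min A I : is_ideal I -> (forall a, A a -> I a) -> forall f, ideal_gen A f -> I f.
Proof. by move=> HI HA f Hf; apply: Hf. Qed.

Lemma ideal_gen_mono A B : (forall a, A a -> B a) -> forall f, ideal_gen A f -> ideal_gen B f.
Proof.
move=> HAB f Hf; apply: (ideal_gen_min (ideal_gen_ideal B)) Hf => a Aa.
by apply: ideal_gen_sub; apply: HAB.
Qed.

Lemma ideal0 I : is_ideal I -> I 0.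
Proof. by case. Qed.
Lemma idealD I f g : is_ideal I -> I f -> I g -> I (f + g).
Proof. by case=> _ H _; apply: H. Qed.
Lemma idealM I f g : is_ideal I -> I g -> I (f * g).
Proof. by case=> _ _ H; apply: H. Qed.
Lemma idealN I f : is_ideal I -> I f -> I (- f).
Proof. by move=> HI Hf; rewrite -mulN1r; apply: idealM. Qed.
Lemma idealB I f g : is_ideal I -> I f -> I g -> I (f - g).
Proof. by move=> HI Hf Hg; apply: idealD => //; apply: idealN. Qed.
Lemma idealZ I c f : is_ideal I -> I f -> I (c *: f).
Proof. by move=> HI Hf; rewrite -mul_mpolyC; apply: idealM. Qed.

Lemma ideal_of_monos I f : is_ideal I -> (forall m, m \in msupp f -> I 'X_[m]) -> I f.
Proof.
move=> HI H; rewrite [f]mpolyE big_seq; apply: big_ind.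
- exact: ideal0.
- by move=> x y; apply: idealD.
- by move=> m Hm; apply: idealZ => //; apply: H.
Qed.

Definition mdiv (M : mon -> Prop) m := exists2 m0, M m0 & (m0 <= m)%MM.

Lemma ideal_gen_monosP (M : mon -> Prop) f :
  ideal_gen (monos M) f <-> forall m, m \in msupp f -> mdiv M m.
Proof.
split.
- move=> Hf; pose P : pset K n := fun f => forall m, m \in msupp f -> mdiv M m.
  apply: (ideal_gen_min (I := P)) Hf.
  + split.
    * by move=> m; rewrite msupp0.
    * move=> f1 g1 H1 H2 m /msuppD_le; rewrite mem_cat => /orP [] ?; [exact: H1|exact: H2].
    * move=> f1 g1 H2 m /msuppM_le /allpairsP [[m1 m2]] /= [_ Hm2 ->].
      case: (H2 _ Hm2) => m0 Hm0 le; exists m0 => //.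
      by apply: lepm_trans le _; apply: lem_addl.
  + move=> a [m0 Hm0 ->] m; rewrite msuppX mem_seq1 => /eqP ->.
    by exists m0 => //; apply: lepm_refl.
- move=> H; apply: ideal_of_monos; first exact: ideal_gen_ideal.
  move=> m /H [m0 Hm0 le]; rewrite -(submK le) mpolyXD.
  by apply: (idealM _ (ideal_gen_ideal _)); apply: ideal_gen_sub; exists m0.
Qed.

End Basics.


Definition pdec (P : Prop) : bool := if excluded_middle_informative P then true else false.
Lemma pdecP (P : Prop) : reflect P (pdec P).
Proof. by rewrite /pdec; case: excluded_middle_informative => H; constructor. Qed.

Section Split.
Variables (K : fieldType) (n : nat).
Local Notation S := {mpoly K[n]}.
Local Notation mon := 'X_{1..n}.
Implicit Types (I A B : pset K n) (f g h : S) (m : mon).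

Lemma msupp_sumX_le (s : seq mon) (b : pred mon) (c : mon -> K) :
  {subset msupp (\sum_(m <- s | b m) c m *: ('X_[m] : S)) <= [seq m <- s | b m]}.
Proof.
move=> m /msupp_sum_le /flatten_mapP [m' Hm'] /msuppZ_le.
by rewrite msuppX mem_seq1 => /eqP ->.
Qed.

Lemma split_poly (P : mon -> Prop) f : exists p q, [/\ f = p + q,
  (forall m, m \in msupp p -> P m /\ m \in msupp f) &
  (forall m, m \in msupp q -> ~ P m /\ m \in msupp f)].
Proof.
pose b m := pdec (P m).
exists (\sum_(m <- msupp f | b m) f@_m *: 'X_[m]).
exists (\sum_(m <- msupp f | ~~ b m) f@_m *: 'X_[m]).
split.
- by rewrite {1}[f]mpolyE (bigID b) /=.
- move=> m /msupp_sumX_le; rewrite mem_filter => /andP [/pdecP ? ?]; by split.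
- move=> m /msupp_sumX_le; rewrite mem_filter => /andP [/pdecP ? ?]; by split.
Qed.

Definition MP (E : pset K n) := forall f, E f <-> forall m, m \in msupp f -> E 'X_[m].

Lemma gen_MP (M : mon -> Prop) : MP (ideal_gen (monos M)).
Proof.
move=> f; rewrite ideal_gen_monosP; split => H m Hm.
- by apply/ideal_gen_monosP => m'; rewrite msuppX mem_seq1 => /eqP ->; apply: H.
- by move/ideal_gen_monosP: (H m Hm); apply; rewrite msuppX mem_seq1.
Qed.

Lemma MP_eq A B : pset_eq A B -> MP A -> MP B.
Proof.
move=> E HA f; rewrite -E HA; split => H m Hm; [rewrite -E | rewrite E]; exact: H.
Qed.

Lemma monomial_MP E : monomial_ideal E -> MP E.
Proof. by case=> M HM; apply: MP_eq (gen_MP M) => f; rewrite HM. Qed.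

Lemma sum_mono A B m : MP A -> MP B -> ideal_sum A B 'X_[m] -> A 'X_[m] \/ B 'X_[m].
Proof.
move=> HA HB [a [b [Ha Hb E]]].
have : m \in msupp (a + b) by rewrite -E msuppX mem_seq1.
move/msuppD_le; rewrite mem_cat => /orP [] H.
- by left; move/HA: Ha; apply.
- by right; move/HB: Hb; apply.
Qed.

Lemma sum_MP_intro A B f : MP A -> MP B -> is_ideal A -> is_ideal B ->
  (forall m, m \in msupp f -> A 'X_[m] \/ B 'X_[m]) -> ideal_sum A B f.
Proof.
move=> HA HB IA IB H.
have [p [q [E Hp Hq]]] := split_poly (fun m => A 'X_[m]) f.
exists p, q; split => //.
- by apply/HA => m /Hp [].
- apply/HB => m /Hq [H1 H2]; by case: (H m H2).
Qed.

Lemma ideal_sum_ideal A B : is_ideal A -> is_ideal B -> is_ideal (ideal_sum A B).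
Proof.
move=> IA IB; split.
- by exists 0, 0; rewrite addr0; split => //; apply: ideal0.
- move=> f g [a [b [Ha Hb ->]]] [a' [b' [Ha' Hb' ->]]].
  exists (a + a'), (b + b'); split; [exact: idealD|exact: idealD|].
  by rewrite addrACA.
- move=> f g [a [b [Ha Hb ->]]]; exists (f * a), (f * b); split;
    [exact: idealM|exact: idealM|by rewrite mulrDr].
Qed.

End Split.


Section Lead.
Variables (K : fieldType) (n : nat) (ord : rel 'X_{1..n}).
Hypothesis Hord : monomial_order ord.
Local Notation S := {mpoly K[n]}.
Local Notation mon := 'X_{1..n}.
Implicit Types (I A B E : pset K n) (f g h : S) (m : mon).

Definition LM I m := exists f, [/\ I f, f != 0 & is_lead_mon ord f m].

Lemma ideal_gen_ext A B : pset_eq A B -> pset_eq (ideal_gen A) (ideal_gen B).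
Proof. by move=> E f; split; apply: ideal_gen_mono => a; rewrite E. Qed.

Lemma init_eq I : pset_eq (init_ideal ord I) (ideal_gen (monos (LM I))).
Proof.
apply: ideal_gen_ext => p; split.
- by case=> f [m [If nz Hl ->]]; exists m => //; exists f.
- by case=> m [f [If nz Hl]] ->; exists f, m.
Qed.

Lemma init_MP I : MP (init_ideal ord I).
Proof. apply: MP_eq (gen_MP (LM I)) => f; by rewrite init_eq. Qed.

Lemma init_ideal_ideal I : is_ideal (init_ideal ord I).
Proof. exact: ideal_gen_ideal. Qed.

Lemma init_monoP I m : init_ideal ord I 'X_[m] <-> mdiv (LM I) m.
Proof.
rewrite init_eq ideal_gen_monosP; split => [H|H m']; first by apply: H; rewrite msuppX mem_seq1.
by rewrite msuppX mem_seq1 => /eqP ->.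
Qed.

Lemma init_sub I I' : (forall f, I f -> I' f) -> forall f, init_ideal ord I f -> init_ideal ord I' f.
Proof.
move=> H; apply: ideal_gen_mono => p [f [m [If nz Hl ->]]]; exists f, m; split => //; exact: H.
Qed.

Lemma init_ext I I' : pset_eq I I' -> pset_eq (init_ideal ord I) (init_ideal ord I').
Proof. by move=> E f; split; apply: init_sub => g; rewrite E. Qed.

Lemma X_neq0 m : ('X_[m] : S) != 0.
Proof. by rewrite -msupp_eq0 msuppX. Qed.

Lemma lead_X m : is_lead_mon ord ('X_[m] : S) m.
Proof.
case: Hord => -[Hr _ _ _ _] _.
by split; rewrite ?msuppX ?mem_seq1 // => m'; rewrite mem_seq1 => /eqP ->.
Qed.

Lemma ideal_mult I m0 m : is_ideal I -> I 'X_[m0] -> (m0 <= m)%MM -> I 'X_[m].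
Proof. by move=> HI H le; rewrite -(submK le) mpolyXD; apply: idealM. Qed.

Lemma init_in_MP E m : is_ideal E -> MP E -> init_ideal ord E 'X_[m] -> E 'X_[m].
Proof.
move=> IE ME /init_monoP [m0 [e [Ee nz [Hs _]]] le].
apply: ideal_mult le => //; move/ME: Ee; exact.
Qed.

Lemma X_in_init I m : I 'X_[m] -> init_ideal ord I 'X_[m].
Proof. by move=> H; apply: ideal_gen_sub; exists 'X_[m], m; split => //; [exact: X_neq0|exact: lead_X]. Qed.

Lemma lead_in_init I f m : I f -> f != 0 -> is_lead_mon ord f m -> init_ideal ord I 'X_[m].
Proof. by move=> If nz Hl; apply: ideal_gen_sub; exists f, m. Qed.

Lemma bigcap_MP (L : Type) (E : L -> pset K n) : (forall i, MP (E i)) -> MP (ideal_bigcap E).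
Proof.
move=> H f; split.
- by move=> Hf m Hm i; move/H: (Hf i); apply.
- by move=> Hf i; apply/H => m Hm; apply: Hf.
Qed.

Lemma bigcap_ideal (L : Type) (E : L -> pset K n) : (forall i, is_ideal (E i)) -> is_ideal (ideal_bigcap E).
Proof.
move=> H; split.
- by move=> i; apply: ideal0.
- by move=> f g Hf Hg i; apply: idealD.
- by move=> f g Hg i; apply: idealM.
Qed.

Lemma part1 (J : pset K n) (HJ : is_ideal J) (L : Type) (E : L -> pset K n)
  (HEi : forall i, is_ideal (E i) /\ monomial_ideal (E i))
  (Hnice : forall i, G_nice ord J (E i)) : G_nice ord J (ideal_bigcap E).
Proof.
have IE i : is_ideal (E i) by case: (HEi i).
have ME i : MP (E i) by apply: monomial_MP; case: (HEi i).
have IEin := bigcap_ideal IE.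
have MEin := bigcap_MP ME.
have IJE := ideal_sum_ideal HJ IEin.
move=> f; split.
- move=> Hf; apply: sum_MP_intro; try exact: init_MP; try exact: init_ideal_ideal.
  move=> m Hm; have /init_monoP [m0 [g [Hg nz Hl]] le] := (init_MP _ f).1 Hf m Hm.
  suff [H|H] : init_ideal ord J 'X_[m0] \/ init_ideal ord (ideal_bigcap E) 'X_[m0].
  + by left; apply: (ideal_mult (init_ideal_ideal _) H le).
  + by right; apply: (ideal_mult (init_ideal_ideal _) H le).
  case: (classic (init_ideal ord J 'X_[m0])) => HJm; [by left|right].
  apply: X_in_init => i.
  have Hgi : ideal_sum J (E i) g.
    by case: Hg => a [b [Ha Hb ->]]; exists a, b; split => //; apply: Hb.
  have := lead_in_init Hgi nz Hl; move/Hnice.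
  case/sum_mono; try exact: init_MP; first by move/HJm.
  by apply: init_in_MP.
- case=> a [b [Ha Hb ->]]; apply: (idealD (init_ideal_ideal _)).
  + apply: init_sub Ha => g Hg; exists g, 0; rewrite addr0; split => //; exact: ideal0.
  + apply: init_sub Hb => g Hg; exists 0, g; rewrite add0r; split => //; exact: ideal0.
Qed.

End Lead.


Section WF.
Variables (K : fieldType) (n : nat) (ord : rel 'X_{1..n}).
Hypothesis Hord : monomial_order ord.
Local Notation S := {mpoly K[n]}.
Local Notation mon := 'X_{1..n}.
Implicit Types (I A B E : pset K n) (f g h : S) (m : mon).

Lemma ord_refl : reflexive ord. Proof. by case: Hord => -[]. Qed.
Lemma ord_anti : antisymmetric ord. Proof. by case: Hord => -[]. Qed.
Lemma ord_trans : transitive ord. Proof. by case: Hord => -[]. Qed.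
Lemma ord_total : total ord. Proof. by case: Hord => -[]. Qed.
Lemma ord_compat m1 m2 m3 : ord m1 m2 -> ord (m1 + m3)%MM (m2 + m3)%MM.
Proof. by case: Hord => _; apply. Qed.

Lemma div_ord m1 m2 : (m1 <= m2)%MM -> ord m1 m2.
Proof.
move=> le; rewrite -(submK le); have H0 : ord 0%MM (m2 - m1)%MM by case: Hord => -[].
by have := ord_compat m1 H0; rewrite add0m.
Qed.

Lemma seq_ext (R : rel mon) (Rt : total R) (Rtr : transitive R) (P : mon -> Prop) (s : seq mon) :
  (forall y, y \in s -> ~ P y) \/ exists x, [/\ x \in s, P x & forall y, y \in s -> P y -> R y x].
Proof.
elim: s => [|a s [IH|[x [xs Px Hx]]]]; first by left.
- case: (classic (P a)) => Pa.
  + right; exists a; split; rewrite ?mem_head //.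
    move=> y; rewrite in_cons => /orP [/eqP -> _|ys Py]; first by case: (orP (Rt a a)).
    by case: (IH y ys Py).
  + left => y; rewrite in_cons => /orP [/eqP ->|/IH] //.
- case: (classic (P a)) => Pa; last first.
    right; exists x; split; rewrite ?in_cons ?xs ?orbT //.
    by move=> y; rewrite in_cons => /orP [/eqP ->|ys Py] //; apply: Hx.
  case/orP: (Rt a x) => Hax.
  + right; exists x; split; rewrite ?in_cons ?xs ?orbT //.
    by move=> y; rewrite in_cons => /orP [/eqP ->|ys Py] //; apply: Hx.
  + right; exists a; split; rewrite ?mem_head //.
    move=> y; rewrite in_cons => /orP [/eqP -> _|ys Py]; first by case: (orP (Rt a a)).
    exact: Rtr (Hx y ys Py) Hax.
Qed.

Definition olt m1 m2 := ord m1 m2 /\ m1 <> m2.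

Lemma olt_wf : well_founded olt.
Proof.
move=> m; apply: NNPP => Hm.
have [F [F1 F2]] := dickson (fun x => ~ Acc olt x).
have Rt : total (fun a b => ord b a) by move=> a b; rewrite orbC ord_total.
have Rtr : transitive (fun a b => ord b a) by move=> a b c H1 H2; exact: ord_trans H2 H1.
case: (seq_ext Rt Rtr (fun x => ~ Acc olt x) F) => [H|[f [Hf Pf Hmin]]].
  by have [f Hf _] := F2 m Hm; apply: (H f Hf); apply: F1.
apply: Pf; constructor => y Hy; apply: NNPP => Py.
have [f' Hf' le] := F2 y Py.
have o1 : ord f f' by apply: Hmin => //; apply: F1.
have o2 := div_ord le.
case: Hy => Hyf Hne; apply: Hne; apply: ord_anti.
by rewrite Hyf /=; apply: ord_trans o1 o2.
Qed.

Variable J : pset K n.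
Hypothesis HJ : is_ideal J.
Let bad m := init_ideal ord J 'X_[m].

Lemma reduce_step g mt : mt \in msupp g -> bad mt ->
  (forall m, m \in msupp g -> bad m -> ord m mt) ->
  exists j, J j /\ forall m, m \in msupp (g - j) -> bad m -> olt m mt.
Proof.
move=> Hmt Bmt Hmax.
have [m0 [h [Jh nzh [Hm0 Hl]]] le] := (init_monoP _ _ _).1 Bmt.
set d := (mt - m0)%MM.
have Ed : (d + m0)%MM = mt by rewrite submK.
pose c := g@_mt / h@_m0.
exists (c *: (h * 'X_[d])); split.
  by apply: idealZ => //; rewrite mulrC; apply: idealM.
have hm0 : h@_m0 != 0 by rewrite -mcoeff_msupp.
have coef0 : (g - c *: (h * 'X_[d]))@_mt = 0.
  by rewrite mcoeffB mcoeffZ -Ed mcoeffMX Ed /c divfK // subrr.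
move=> m Hm Bm; split; last first.
  by move=> E; move: Hm; rewrite E mcoeff_msupp coef0 eqxx.
move/msuppB_le: Hm; rewrite mem_cat => /orP [Hg|/msuppZ_le].
  exact: Hmax.
rewrite (perm_mem (msuppMX _ _)) => /mapP [m' Hm' ->].
rewrite -Ed addmC [(d + m0)%MM]addmC; apply: ord_compat; exact: Hl.
Qed.

Lemma NF_aux m : forall g, (forall m', m' \in msupp g -> bad m' -> ord m' m) ->
  exists j, J j /\ forall m', m' \in msupp (g - j) -> ~ bad m'.
Proof.
elim: (olt_wf m) => {}m _ IH g Hg.
case: (seq_ext ord_total ord_trans bad (msupp g)) => [H|[mt [Hmt Bmt Hmax]]].
  by exists 0; split; [exact: ideal0|rewrite subr0].
have [j1 [Jj1 H1]] := reduce_step Hmt Bmt Hmax.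
case: (seq_ext ord_total ord_trans bad (msupp (g - j1))) => [H|[mt' [Hmt' Bmt' Hmax']]].
  by exists j1.
have [lt1 ne1] := H1 mt' Hmt' Bmt'.
have omt := Hg mt Hmt Bmt.
have lt2 : olt mt' m.
  split; first exact: ord_trans lt1 omt.
  move=> E; apply: ne1; apply: ord_anti; rewrite lt1 /=; rewrite E; exact: omt.
have [j2 [Jj2 H2]] := IH mt' lt2 (g - j1) Hmax'.
exists (j1 + j2); split; first exact: idealD.
by rewrite opprD addrA.
Qed.

Lemma NF g : exists j, J j /\ forall m, m \in msupp (g - j) -> ~ bad m.
Proof.
case: (seq_ext ord_total ord_trans bad (msupp g)) => [H|[mt [Hmt Bmt Hmax]]].
  by exists 0; split; [exact: ideal0|rewrite subr0].
exact: (NF_aux Hmax).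
Qed.

End WF.


Section Main.
Variables (K : fieldType) (n : nat) (ord : rel 'X_{1..n}).
Hypothesis Hord : monomial_order ord.
Local Notation S := {mpoly K[n]}.
Local Notation mon := 'X_{1..n}.
Implicit Types (I A B E : pset K n) (f g h : S) (m : mon).
Variable J : pset K n.
Hypothesis HJ : is_ideal J.

Lemma lead_exists f : f != 0 -> exists m, is_lead_mon ord f m.
Proof.
move=> nz; case: (seq_ext (ord_total Hord) (ord_trans Hord) (fun _ => True) (msupp f)) => [H|[x [Hx _ Hmax]]].
  move: nz; rewrite -msupp_eq0; case: (msupp f) H => [|a s] H //.
  by exfalso; apply: (H a); rewrite ?mem_head.
by exists x; split => // y Hy; apply: Hmax.
Qed.

Lemma key E r : is_ideal E -> MP E -> G_nice ord J E -> ideal_sum J E r ->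
  (forall m, m \in msupp r -> ~ init_ideal ord J 'X_[m]) -> E r.
Proof.
move=> IE ME Hn Hr Hb.
have [p [q [Er Hp Hq]]] := split_poly (fun m => E 'X_[m]) r.
have Ep : E p by apply/ME => m /Hp [].
have Hq' : ideal_sum J E q.
  have -> : q = r - p by rewrite Er addrC addKr.
  apply: idealB => //; first exact: ideal_sum_ideal.
  by exists 0, p; rewrite add0r; split => //; apply: ideal0.
case: (eqVneq q 0) => [q0|nzq]; first by rewrite Er q0 addr0.
have [x Hx] := lead_exists nzq.
have := lead_in_init Hq' nzq Hx; move/Hn.
have [Hxs Hxr] := Hq x (proj1 Hx).
case/sum_mono; try exact: init_MP.
- by move/Hb; case; apply: Hxr.
- by move/(init_in_MP IE ME).
Qed.

Variables (L : Type) (Es : L -> pset K n).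
Hypothesis HEi : forall i, is_ideal (Es i) /\ monomial_ideal (Es i).
Hypothesis Hnice : forall i, G_nice ord J (Es i).
Let Ein := ideal_bigcap Es.

Lemma part2 : pset_eq (ideal_bigcap (fun i => ideal_sum J (Es i))) (ideal_sum J Ein).
Proof.
have IE i : is_ideal (Es i) by case: (HEi i).
have ME i : MP (Es i) by apply: monomial_MP; case: (HEi i).
move=> f; split.
- move=> Hf; have [j [Jj Hr]] := NF Hord HJ f.
  exists j, (f - j); split => //; last by rewrite addrC subrK.
  move=> i; apply: key => //.
  case: (Hf i) => a [b [Ha Hb ->]]; exists (a - j), b; split => //.
    exact: idealB.
  by rewrite addrAC.
- by case=> a [b [Ha Hb ->]] i; exists a, b; split => //; apply: Hb.
Qed.

Lemma below_min : forall k m, (mdeg m < k)%N -> Ein 'X_[m] ->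
  exists m1, (Ein 'X_[m1] /\ forall m', Ein 'X_[m'] -> lem m' m1 -> m' = m1) /\ (m1 <= m)%MM.
Proof.
elim=> [//|k IH] m Hk Hm.
case: (classic (forall m', Ein 'X_[m'] -> lem m' m -> m' = m)) => Hmin.
  by exists m; split => //; apply: lepm_refl.
have [m' Hm'] : exists m', ~ (Ein 'X_[m'] -> lem m' m -> m' = m).
  by apply: NNPP => H; apply: Hmin => m'; apply: NNPP => H'; apply: H; exists m'.
have [E1 H1] := imply_to_and _ _ Hm'.
have [le H2] := imply_to_and _ _ H1.
have Hlt : (mdeg m' < k)%N.
  have E : m = ((m - m') + m')%MM by rewrite submK.
  have nz : (m - m')%MM != 0%MM.
    apply/eqP => E0; apply: H2; by rewrite E E0 add0m.
  have p0 : (0 < mdeg (m - m')%MM)%N by rewrite lt0n mdeg_eq0.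
  move: Hk; rewrite {1}E mdegD => Hk; lia.
have [m1 [Hm1 le1]] := IH m' Hlt E1.
by exists m1; split => //; apply: lepm_trans le1 le.
Qed.

Lemma part3 GJ : groebner_basis ord J GJ ->
  groebner_basis ord (ideal_bigcap (fun i => ideal_sum J (Es i)))
                 (pset_union GJ (min_gens Ein)).
Proof.
have IE i : is_ideal (Es i) by case: (HEi i).
have ME i : MP (Es i) by apply: monomial_MP; case: (HEi i).
have IEin : is_ideal Ein := bigcap_ideal IE.
have MEin : MP Ein := bigcap_MP ME.
case=> [[s1 Hs1] GJJ HGJ].
set G := pset_union GJ (min_gens Ein).
have GI : forall g, G g -> ideal_bigcap (fun i => ideal_sum J (Es i)) g.
  move=> g [Hg|[m [Hm _] ->]] i.
  - by exists g, 0; rewrite addr0; split; [exact: GJJ|exact: ideal0|].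
  - by exists 0, 'X_[m]; rewrite add0r; split; [exact: ideal0|exact: Hm|].
split => //.
- have [F [F1 F2]] := dickson (fun m => Ein 'X_[m]).
  exists [seq x <- s1 ++ map (fun m => 'X_[m] : S) F | pdec (G x)] => f.
  rewrite mem_filter; split.
  + move=> Gf; rewrite (introT (pdecP _) Gf) /= mem_cat; apply/orP.
    case: Gf => [/Hs1 ->|[m [Hm Hmin] ->]]; first by left.
    right; have [f0 Hf0 le] := F2 m Hm.
    by rewrite -(Hmin f0 (F1 f0 Hf0) le); apply: map_f.
  + by case/andP => /pdecP.
- move=> h; split.
  + move=> Hh; have := (init_ext ord part2 h).1 Hh; move/(part1 Hord HJ HEi Hnice).
    case=> a [b [Ha Hb ->]]; apply: (idealD (ideal_gen_ideal _)).
    * move/HGJ: Ha; apply: ideal_gen_mono => p [g [m [Gg nz Hl ->]]].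
      by exists g, m; split => //; left.
    * apply: ideal_of_monos; first exact: ideal_gen_ideal.
      move=> m Hm; have := (init_MP ord Ein b).1 Hb m Hm.
      move/(init_in_MP IEin MEin) => Em.
      have [m1 [Hm1 le]] := below_min (ltnSn (mdeg m)) Em.
      apply: (ideal_mult (ideal_gen_ideal _) _ le); apply: ideal_gen_sub.
      exists 'X_[m1], m1; split => //; [by right; exists m1|exact: X_neq0|exact: lead_X].
  + apply: ideal_gen_min; first exact: init_ideal_ideal.
    move=> p [g [m [Gg nz Hl ->]]]; apply: lead_in_init Hl => //; exact: GI.
Qed.

End Main.


End Helpers.
Import Helpers.

Theorem mainTheorem6 (K : fieldType) (n : nat) (ord : rel 'X_{1..n})
  (Hord : monomial_order ord)
  (J : pset K n) (HJ : is_ideal J)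
  (L : Type) (i0 : L) (E : L -> pset K n)
  (HEi : forall i, is_ideal (E i) /\ monomial_ideal (E i))
  (Hnice : forall i, G_nice ord J (E i)) :
  let Einter := ideal_bigcap E in
  [/\ G_nice ord J Einter,
      pset_eq (ideal_bigcap (fun i => ideal_sum J (E i))) (ideal_sum J Einter) &
      forall GJ : pset K n, groebner_basis ord J GJ ->
        groebner_basis ord (ideal_bigcap (fun i => ideal_sum J (E i)))
                       (pset_union GJ (min_gens Einter))].
Proof.
move=> Einter; apply: And3.
- exact: (part1 Hord HJ HEi Hnice).
- exact: (part2 Hord HJ HEi Hnice).
- move=> GJ HGJ; exact: (part3 Hord HJ HEi Hnice HGJ).
Qed.
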